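(* Let $m,n\ge1$ and consider the product of simplices $\Delta^{m-1}\times\Delta^{n-1}\subset\mathbb{R}^m\times\mathbb{R}^n$. Given any subdivision of the vertices of $\Delta^{m-1}\times\Delta^{n-1}$ and any interior cell $C$ of this subdivision, there exist positive real weights $w_1,\dots,w_m$ with $\sum_i w_i=1$ such that $C$ contains the point $(w_1,\dots,w_m,\tfrac1n\mathbf{1}_n)$ in its relative interior.
   Context: $\Delta^{k-1}=\mathrm{conv}(e_1,\dots,e_k)\subset\mathbb{R}^k$ is the standard simplex, so the vertices of $\Delta^{m-1}\times\Delta^{n-1}$ are the points $(e_i,e_j)$. A subdivision of the vertices is a polyhedral subdivision of $\Delta^{m-1}\times\Delta^{n-1}$ whose cells are convex hulls of subsets of these vertices (cells cover the product, and any two intersect in a common face). A cell is interior if it is not contained in any facet of $\Delta^{m-1}\times\Delta^{n-1}$. $\mathbf{1}_n$ is the all-ones vector. *)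

(* Defs.v *)
From HB Require Import structures.
From mathcomp Require Import all_boot all_order all_algebra.
From mathcomp Require Import reals.
Set Implicit Arguments. Unset Strict Implicit. Unset Printing Implicit Defensive.
Import Order.TTheory GRing.Theory Num.Theory.
Local Open Scope ring_scope.

(* Points of R^m x R^n are row vectors of length m + n: (x, y) = row_mx x y. *)
Section ProductOfSimplices.
Variables (R : realType) (m n : nat).

Definition pt := 'rV[R]_(m + n).
Definition ptset := pt -> Prop.

Definition pvert (v : 'I_m * 'I_n) : pt :=
  row_mx (delta_mx 0 v.1) (delta_mx 0 v.2).

Definition pconv (S : {set 'I_m * 'I_n}) : ptset := fun x =>
  exists l : 'I_m * 'I_n -> R,
    [/\ forall v, 0 <= l v,
        forall v, v \notin S -> l v = 0,
        \sum_v l v = 1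
      & x = \sum_v l v *: pvert v].

Definition prodsimp : ptset := pconv setT.

Definition pdot (a x : pt) : R := \sum_k a 0 k * x 0 k.

Definition psubset (A B : ptset) : Prop := forall x, A x -> B x.

(* F is a face of the convex set P: intersection of P with a supporting
   (weakly valid) hyperplane; includes the empty face and P itself. *)
Definition is_face (P F : ptset) : Prop :=
  exists (a : pt) (b : R),
    (forall x, P x -> pdot a x <= b) /\
    (forall x, F x <-> (P x /\ pdot a x = b)).

Definition is_facet (P F : ptset) : Prop :=
  [/\ is_face P F,
      exists x, P x /\ ~ F x
    & forall G, is_face P G -> psubset F G -> (exists x, P x /\ ~ G x) ->
        psubset G F].

Definition is_vertex_subdivision (cells : {set {set 'I_m * 'I_n}}) : Prop :=
  (forall x, prodsimp x <-> exists2 S, S \in cells & pconv S x) /\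
  (forall S1 S2, S1 \in cells -> S2 \in cells ->
     is_face (pconv S1) (fun x => pconv S1 x /\ pconv S2 x) /\
     is_face (pconv S2) (fun x => pconv S1 x /\ pconv S2 x)).

Definition interior_cell (S : {set 'I_m * 'I_n}) : Prop :=
  forall F, is_facet prodsimp F -> ~ psubset (pconv S) F.

(* Relative interior: p lies in conv S and some neighbourhood of p (in the
   sup norm) inside the affine hull of conv S (= affine combinations of the
   vertices in S) is contained in conv S. *)
Definition in_relint (S : {set 'I_m * 'I_n}) (p : pt) : Prop :=
  pconv S p /\
  exists2 eps : R, 0 < eps &
    forall mu : 'I_m * 'I_n -> R,
      (forall v, v \notin S -> mu v = 0) ->
      \sum_v mu v = 1 ->
      (forall k, `|(\sum_v mu v *: pvert v) 0 k - p 0 k| < eps) ->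
      pconv S (\sum_v mu v *: pvert v).

End ProductOfSimplices.

(* Main.v *)
Require Import Defs.
From HB Require Import structures.
From mathcomp Require Import all_boot all_order all_algebra.
From mathcomp Require Import reals.
From mathcomp Require Import ring lra.
Import Order.TTheory GRing.Theory Num.Theory.
Local Open Scope ring_scope.
Set Implicit Arguments. Unset Strict Implicit. Unset Printing Implicit Defensive.

Section Aux.
Variables (R : realType) (m n : nat).
Local Notation V := ('I_m * 'I_n)%type.
Local Notation pvert := (@pvert R m n).
Local Notation pdot := (@pdot R m n).
Local Notation pconv := (@pconv R m n).
Local Notation prodsimp := (@prodsimp R m n).

Lemma pvertl (v : V) i : pvert v 0 (lshift n i) = (v.1 == i)%:R.
Proof. by rewrite /Defs.pvert row_mxEl mxE eqxx /= eq_sym. Qed.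

Lemma pvertr (v : V) j : pvert v 0 (rshift m j) = (v.2 == j)%:R.
Proof. by rewrite /Defs.pvert row_mxEr mxE eqxx /= eq_sym. Qed.

Lemma pvert_ge0 v k : 0 <= pvert v 0 k.
Proof. by rewrite -[k]splitK; case: split => a /=; rewrite ?pvertl ?pvertr ler0n. Qed.

Lemma coordE (c : V -> R) k : (\sum_v c v *: pvert v) 0 k = \sum_v c v * pvert v 0 k.
Proof. by rewrite summxE; apply: eq_bigr => v _; rewrite mxE. Qed.

Lemma sum1l (c : V -> R) i : \sum_v c v * (v.1 == i)%:R = \sum_j c (i, j).
Proof.
transitivity (\sum_(v : V) c (v.1, v.2) * (v.1 == i)%:R); first by apply: eq_bigr => -[a b].
rewrite -(pair_bigA _ (fun a b => c (a,b) * (a == i)%:R)) /=.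
rewrite (bigD1 i) //= [X in _ + X]big1 ?addr0.
- by apply: eq_bigr => j _; rewrite eqxx mulr1.
by move=> i' /negbTE ne; apply: big1 => j _; rewrite ne mulr0.
Qed.

Lemma sum1r (c : V -> R) j : \sum_v c v * (v.2 == j)%:R = \sum_i c (i, j).
Proof.
transitivity (\sum_(v : V) c (v.1, v.2) * (v.2 == j)%:R); first by apply: eq_bigr => -[a b].
rewrite -(pair_bigA _ (fun a b => c (a,b) * (b == j)%:R)) /=.
rewrite exchange_big (bigD1 j) //= [X in _ + X]big1 ?addr0.
- by apply: eq_bigr => i _; rewrite eqxx mulr1.
by move=> j' /negbTE ne; apply: big1 => i _; rewrite ne mulr0.
Qed.

Lemma pdotD a x y : pdot a (x + y) = pdot a x + pdot a y.
Proof. by rewrite /pdot -big_split; apply: eq_bigr => k _; rewrite mxE mulrDr. Qed.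

Lemma pdot_comb a (c : V -> R) : pdot a (\sum_v c v *: pvert v) = \sum_v c v * pdot a (pvert v).
Proof.
rewrite /pdot; under eq_bigr => k _ do rewrite coordE big_distrr /=.
rewrite exchange_big; apply: eq_bigr => v _; rewrite big_distrr; apply: eq_bigr => k _.
by rewrite mulrCA.
Qed.

Lemma coord_ge0 x k : prodsimp x -> 0 <= x 0 k.
Proof.
case=> l [l0 _ _ ->]; rewrite coordE; apply: sumr_ge0 => v _.
by rewrite mulr_ge0 ?pvert_ge0.
Qed.

Lemma pvert_in (S : {set V}) v : v \in S -> pconv S (pvert v).
Proof.
move=> vS; exists (fun u => (u == v)%:R); split.
- by move=> u; rewrite ler0n.
- by move=> u uS; case: eqP uS => // ->; rewrite vS.
- by rewrite (bigD1 v) //= eqxx big1 ?addr0 // => u /negbTE ->.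
- by rewrite (bigD1 v) //= eqxx scale1r big1 ?addr0 // => u /negbTE ->; rewrite scale0r.
Qed.

Lemma pconv_simp (S : {set V}) x : pconv S x -> prodsimp x.
Proof. by case=> l [l0 _ l1 ->]; exists l; split => // v; rewrite inE. Qed.


Definition Fk k : ptset R m n := fun x => prodsimp x /\ x 0 k = 0.

Lemma pdotN_delta k x : pdot (- delta_mx 0 k) x = - x 0 k.
Proof.
rewrite /Defs.pdot (bigD1 k) //= big1 ?addr0 ?mxE ?eqxx ?mulN1r //.
by move=> k' /negbTE nk; rewrite !mxE nk oppr0 mul0r.
Qed.

Lemma Pvert v : prodsimp (pvert v).
Proof. exact: (pvert_in (in_setT v)). Qed.

Lemma facet_k k : (exists v, pvert v 0 k != 0) ->
  (forall u w, pvert u 0 k != 0 -> pvert w 0 k != 0 -> u = w \/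
     exists z z', [/\ pvert z 0 k = 0, pvert z' 0 k = 0 &
                      pvert u + pvert z' = pvert w + pvert z]) ->
  is_facet prodsimp (Fk k).
Proof.
move=> [v0 nv0] Hr; split.
- exists (- delta_mx 0 k), 0; split.
  + by move=> x Px; rewrite pdotN_delta oppr_le0 coord_ge0.
  + move=> x; rewrite pdotN_delta; split => -[Px h]; split => //.
    * by rewrite h oppr0.
    * by apply/eqP; rewrite -oppr_eq0 h.
- by exists (pvert v0); split; [exact: Pvert | case=> _ /eqP; apply/negP].
move=> G [a [b [Ha HG]]] FG [y [Py nGy]] x Gx.
pose f v := pdot a (pvert v).
have fle v : f v <= b by apply: Ha; apply: Pvert.
have fz z : pvert z 0 k = 0 -> f z = b.
  by move=> h; have /HG[_] := FG (pvert z) (conj (Pvert z) h).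
have [u fu] : exists u, f u < b.
  case: (boolP [exists u, f u < b]) => [/existsP//|/existsPn nu].
  exfalso; apply: nGy; apply/HG; split => //.
  case: (Py) => l [l0 _ l1 ->]; rewrite pdot_comb.
  have fb v : f v = b by apply/eqP; rewrite eq_le fle /= leNgt nu.
  under eq_bigr do rewrite [pdot _ _]fb.
  by rewrite -big_distrl /= l1 mul1r.
have nu : pvert u 0 k != 0.
  by apply/negP => /eqP /fz fu'; move: fu; rewrite fu' ltxx.
have fw w : pvert w 0 k != 0 -> f w < b.
  move=> nw; case: (Hr u w nu nw) => [<- //|[z [z' [z0 z'0 e]]]].
  have : f u + f z' = f w + f z by rewrite /f -!pdotD e.
  by rewrite (fz z) // (fz z') // => /addIr <-.
have /HG [Px hx] := Gx; split => //.
case: (Px) => l [l0 _ l1 xE].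
have S0 : \sum_v l v * (b - f v) = 0.
  under eq_bigr do rewrite mulrBr.
  rewrite sumrB -big_distrl /= l1 mul1r.
  by rewrite /f -pdot_comb -xE hx subrr.
have ge v : true -> 0 <= l v * (b - f v) by move=> _; rewrite mulr_ge0 // subr_ge0.
have each := psumr_eq0P ge S0.
rewrite xE coordE big1 // => v _.
case: (eqVneq (pvert v 0 k) 0) => [->|nv]; first by rewrite mulr0.
have /eqP := each v isT; rewrite mulf_eq0 subr_eq0 => /orP[/eqP ->|/eqP e]; first by rewrite mul0r.
by move: (fw v nv); rewrite e ltxx.
Qed.

Lemma other (p : nat) (i0 : 'I_p) : (1 < p)%N -> exists i1 : 'I_p, i1 != i0.
Proof.
move=> p1; have p0 : (0 < p)%N by apply: ltn_trans p1.
case: (eqVneq i0 (Ordinal p0)) => [->|ne]; last by exists (Ordinal p0); rewrite eq_sym.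
by exists (Ordinal p1).
Qed.

Lemma facet_l i0 : (0 < n)%N -> (1 < m)%N || (n == 1%N) -> is_facet prodsimp (Fk (lshift n i0)).
Proof.
move=> n0 hc; apply: facet_k.
  by exists (i0, Ordinal n0); rewrite pvertl eqxx oner_eq0.
move=> [u1 u2] [w1 w2]; rewrite !pvertl /= => hu hw.
have -> : u1 = i0 by case: (u1 =P i0) hu => //; rewrite /= eqxx.
have -> : w1 = i0 by case: (w1 =P i0) hw => //; rewrite /= eqxx.
case/orP: hc => [/(other i0) [i1 ne]| /eqP n1].
  right; exists (i1, u2), (i1, w2); rewrite !pvertl /= (negbTE ne); split => //.
  by rewrite /Defs.pvert /= !add_row_mx addrC [delta_mx 0 u2 + _]addrC.
left; congr (_, _); apply: val_inj => /=.
by case: u2 w2 => [a ha] [b hb] /=; move: ha hb; rewrite n1; case: a; case: b.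
Qed.

Lemma facet_r j0 : (0 < m)%N -> (1 < n)%N || (m == 1%N) -> is_facet prodsimp (Fk (rshift m j0)).
Proof.
move=> m0 hc; apply: facet_k.
  by exists (Ordinal m0, j0); rewrite pvertr eqxx oner_eq0.
move=> [u1 u2] [w1 w2]; rewrite !pvertr /= => hu hw.
have -> : u2 = j0 by case: (u2 =P j0) hu => //; rewrite /= eqxx.
have -> : w2 = j0 by case: (w2 =P j0) hw => //; rewrite /= eqxx.
case/orP: hc => [/(other j0) [j1 ne]| /eqP m1].
  right; exists (u1, j1), (w1, j1); rewrite !pvertr /= (negbTE ne); split => //.
  by rewrite /Defs.pvert /= !add_row_mx addrC [delta_mx 0 j0 + _]addrC.
left; congr (_, _); apply: val_inj => /=.
by case: u1 w1 => [a ha] [b hb] /=; move: ha hb; rewrite m1; case: a; case: b.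
Qed.

Lemma touch (C : {set V}) k : interior_cell R C -> is_facet prodsimp (Fk k) ->
  exists2 v, v \in C & pvert v 0 k != 0.
Proof.
move=> Hint Hf.
case: (boolP [exists v, (v \in C) && (pvert v 0 k != 0)]) => [/existsP [v /andP[]]|/existsPn H].
  by exists v.
exfalso; apply: (Hint _ Hf) => x Cx; split; first exact: pconv_simp Cx.
case: Cx => l [l0 lC _ ->]; rewrite coordE big1 // => v _.
case: (boolP (v \in C)) => vC; last by rewrite lC // mul0r.
by have := H v; rewrite vC /= negbK => /eqP ->; rewrite mulr0.
Qed.

Lemma touch_l (C : {set V}) i0 : (0 < m)%N -> (0 < n)%N -> interior_cell R C ->
  exists j, (i0, j) \in C.
Proof.
move=> m0 n0 Hint.
case: (boolP ((1 < m)%N || (n == 1%N))) => hc.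
  have [[a b] vC] := touch Hint (facet_l i0 n0 hc).
  rewrite pvertl /= => hv.
  have ea : a = i0 by case: (a =P i0) hv => //; rewrite /= eqxx.
  by exists b; rewrite -ea.
have m1 : m = 1%N by move: hc m0; case: m => [|[|]].
have [[a b] vC _] := touch Hint (facet_r (Ordinal n0) m0 (introT orP (or_intror (introT eqP m1)))).
exists b; suff -> : i0 = a by [].
apply: val_inj; have h1 : (val i0 < 1)%N by rewrite -m1; exact: ltn_ord.
have h2 : (val a < 1)%N by rewrite -m1; exact: ltn_ord.
by move: h1 h2; rewrite !ltnS !leqn0 => /eqP -> /eqP ->.
Qed.

Lemma touch_r (C : {set V}) j0 : (0 < m)%N -> (0 < n)%N -> interior_cell R C ->
  exists i, (i, j0) \in C.
Proof.
move=> m0 n0 Hint.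
case: (boolP ((1 < n)%N || (m == 1%N))) => hc.
  have [[a b] vC] := touch Hint (facet_r j0 m0 hc).
  rewrite pvertr /= => hv.
  have eb : b = j0 by case: (b =P j0) hv => //; rewrite /= eqxx.
  by exists a; rewrite -eb.
have n1 : n = 1%N by move: hc n0; case: n => [|[|]] //; rewrite orbC.
have [[a b] vC _] := touch Hint (facet_l (Ordinal m0) n0 (introT orP (or_intror (introT eqP n1)))).
exists a; suff -> : j0 = b by [].
apply: val_inj; have h1 : (val j0 < 1)%N by rewrite -n1; exact: ltn_ord.
have h2 : (val b < 1)%N by rewrite -n1; exact: ltn_ord.
by move: h1 h2; rewrite !ltnS !leqn0 => /eqP -> /eqP ->.
Qed.

Lemma sum_ev (F : V -> 'rV[R]_(m + n)) :
  \sum_(r < #|{: V}|) F (enum_val r) = \sum_v F v.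
Proof. rewrite [RHS](reindex (@enum_val (V : finType) (V : finType))) //=. exact: onW_bij (enum_val_bij (V : finType)). Qed.

Lemma bounded_inv (C : {set V}) : exists K : R, 0 <= K /\
  forall d : V -> R, (forall v, v \notin C -> d v = 0) ->
  exists d' : V -> R, [/\ forall v, v \notin C -> d' v = 0,
    \sum_v d' v *: pvert v = \sum_v d v *: pvert v &
    forall v, `|d' v| <= (\sum_k `|(\sum_v d v *: pvert v) 0 k|) * K].
Proof.
pose ev := (@enum_val (V : finType) (V : finType)).
pose A : 'M[R]_(#|{: V}|, m + n) := \matrix_r ((ev r \in C)%:R *: pvert (ev r)).
have key (c : V -> R) : (forall v, v \notin C -> c v = 0) ->
    \sum_v c v *: pvert v = (\row_r c (ev r)) *m A.
  move=> c0; rewrite mulmx_sum_row -sum_ev; apply: eq_bigr => r _.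
  rewrite rowK mxE scalerA; case: (boolP (ev r \in C)) => h; first by rewrite mulr1.
  by rewrite c0 // !mul0r !scale0r.
pose P := pinvmx A.
exists (\sum_k \sum_r `|P k r|); split.
  by apply: sumr_ge0 => k _; apply: sumr_ge0 => r _.
move=> d d0; set t := \sum_v d v *: pvert v.
have tA : (t <= A)%MS by rewrite /t (key d d0) submxMl.
pose u := t *m P.
exists (fun v => (v \in C)%:R * u 0 (enum_rank v)); split.
- by move=> v /negbTE ->; rewrite mul0r.
- rewrite (key _); last by move=> v /negbTE ->; rewrite mul0r.
  rewrite -[RHS](mulmxKpV tA) -/P -/u !mulmx_sum_row; apply: eq_bigr => r _.
  rewrite rowK mxE /ev enum_valK.
  case: (boolP (enum_val r \in C)) => h; first by rewrite mul1r.
  by rewrite !scale0r !scaler0.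
- move=> v; set r := enum_rank v.
  have h1 : `|(v \in C)%:R * u 0 r| <= `|u 0 r|.
    by case: (v \in C); rewrite ?mul1r // mul0r normr0 normr_ge0.
  apply: le_trans h1 _; rewrite /u mxE big_distrl /=.
  apply: le_trans (ler_norm_sum _ _ _) _; apply: ler_sum => k _.
  rewrite normrM; apply: ler_wpM2l => //.
  have e1 : `|P k r| <= \sum_r' `|P k r'|.
    by rewrite (bigD1 r) //=; apply: ler_wpDr => //; apply: sumr_ge0.
  apply: le_trans e1 _.
  rewrite (bigD1 k) //=; apply: ler_wpDr => //.
  by apply: sumr_ge0 => k' _; apply: sumr_ge0.
Qed.

Lemma sum_r_coord (c : V -> R) : \sum_j (\sum_v c v *: pvert v) 0 (rshift m j) = \sum_v c v.
Proof.
under eq_bigr do rewrite coordE.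
rewrite exchange_big; apply: eq_bigr => v _.
under eq_bigr do rewrite pvertr.
rewrite -big_distrr /= (bigD1 v.2) //= eqxx big1 ?addr0 ?mulr1 //.
by move=> j /negbTE; rewrite eq_sym => ->.
Qed.

Lemma sum_pairs (c : V -> R) : \sum_v c v = \sum_i \sum_j c (i, j).
Proof.
rewrite (pair_bigA _ (fun a b => c (a, b))) /=; by apply: eq_bigr => -[a b].
Qed.

Lemma main (C : {set V}) : (0 < m)%N -> (0 < n)%N -> interior_cell R C ->
  exists w : 'rV[R]_m,
      [/\ forall i, 0 < w 0 i,
          \sum_i w 0 i = 1
        & in_relint C (row_mx w (n%:R^-1 *: const_mx 1))].
Proof.
move=> m0 n0 Hint.
pose dj j := \sum_i (((i, j) \in C)%:R : R).
have dj1 j : 1 <= dj j.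
  have [i iC] := touch_r j m0 n0 Hint.
  rewrite /dj (bigD1 i) //= iC; apply: ler_wpDr => //.
  by apply: sumr_ge0 => i' _; rewrite ler0n.
have djm j : dj j <= m%:R.
  apply: le_trans (_ : _ <= \sum_(i < m) (1 : R)) _; last by rewrite sumr_const card_ord.
  by apply: ler_sum => i _; case: (_ \in C).
have nR : 0 < (n%:R : R) by rewrite ltr0n.
have mR : 0 < (m%:R : R) by rewrite ltr0n.
pose lam v := ((v \in C)%:R : R) / (n%:R * dj v.2).
have lam0 v : v \notin C -> lam v = 0 by move=> /negbTE h; rewrite /lam h mul0r.
have djp j : 0 < dj j by apply: lt_le_trans (dj1 j); rewrite ltr01.
have lamge v : 0 <= lam v.
  by rewrite /lam divr_ge0 // ?ler0n // mulr_ge0 // ltW.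
have lamlb v : v \in C -> (n%:R * m%:R)^-1 <= lam v.
  move=> vC; rewrite /lam vC mul1r lef_pV2 ?posrE ?mulr_gt0 //.
  by apply: ler_wpM2l; [apply: ltW | apply: djm].
have colsum j : \sum_i lam (i, j) = n%:R^-1.
  rewrite /lam /= -big_distrl /= -/(dj j).
  have := djp j; have := nR; move: (dj j) (n%:R : R) => a b ha hb.
  by field; rewrite !lt0r_neq0.
have lamsum : \sum_v lam v = 1.
  rewrite sum_pairs exchange_big /=; under eq_bigr do rewrite colsum.
  by rewrite sumr_const card_ord -[RHS](mulVf (lt0r_neq0 nR)) mulr_natr.
pose w := \row_i \sum_j lam (i, j).
have pE : \sum_v lam v *: pvert v = row_mx w (n%:R^-1 *: const_mx 1).
  apply/rowP => k; rewrite coordE -[k]splitK; case: split => a /=.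
    by under eq_bigr do rewrite pvertl; rewrite sum1l row_mxEl mxE.
  by under eq_bigr do rewrite pvertr; rewrite sum1r row_mxEr !mxE mulr1 colsum.
exists w; split.
- move=> i; have [j ijC] := touch_l i m0 n0 Hint.
  rewrite mxE; apply: lt_le_trans (_ : lam (i, j) <= _).
    by apply: lt_le_trans (lamlb _ ijC); rewrite invr_gt0 mulr_gt0.
  by rewrite (bigD1 j) //=; apply: ler_wpDr => //; apply: sumr_ge0.
- under eq_bigr do rewrite mxE; by rewrite -sum_pairs.
rewrite -pE; split.
  by exists lam; split => //; rewrite pE.
have [K [K0 HK]] := bounded_inv C.
pose c := (n%:R * m%:R : R)^-1.
have c0 : 0 < c by rewrite invr_gt0 mulr_gt0.
pose eps := c / ((m + n)%:R * K + 1).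
have D0 : 0 < (m + n)%:R * K + 1 by apply: ltr_wpDl => //; rewrite mulr_ge0.
exists eps; first by rewrite divr_gt0.
move=> mu mu0 mu1 close.
set q := \sum_v mu v *: pvert v.
set p := \sum_v lam v *: pvert v.
pose d v := mu v - lam v.
have d0 v : v \notin C -> d v = 0 by move=> h; rewrite /d mu0 // lam0 // subr0.
have dE : \sum_v d v *: pvert v = q - p.
  by rewrite /d /q /p -sumrB; apply: eq_bigr => v _; rewrite scalerBl.
have [d' [d'0 d'E d'b]] := HK d d0.
exists (fun v => lam v + d' v); split.
- move=> v; case: (boolP (v \in C)) => vC; last by rewrite lam0 // d'0 // addr0.
  have hv := d'b v; rewrite dE in hv.
  have hs : \sum_k `|(q - p) 0 k| <= eps *+ (m + n).
    apply: le_trans (_ : _ <= \sum_(k < m + n) eps) _; last by rewrite sumr_const card_ord.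
    by apply: ler_sum => k _; rewrite !mxE; apply: ltW; exact: close.
  have hb : `|d' v| <= c.
    apply: le_trans hv _; apply: le_trans (_ : eps *+ (m + n) * K <= _).
      by apply: ler_wpM2r.
    rewrite -mulr_natr -mulrA /eps -[X in _ <= X]mulr1 -mulrA ler_wpM2l ?ltW //.
    by rewrite mulrC ltr_pdivrMr // mul1r ltrDl ltr01.
  have hl : c <= lam v := lamlb v vC.
  have /andP [hn _] : - `|d' v| <= d' v <= `|d' v| by rewrite -ler_norml.
  lra.
- by move=> v vC; rewrite lam0 // d'0 // addr0.
- rewrite big_split /= lamsum.
  have : \sum_v d' v = \sum_v d v by rewrite -!sum_r_coord d'E.
  move=> ->; rewrite /d sumrB mu1 lamsum subrr addr0 //.
- rewrite [RHS](eq_bigr _ (fun v _ => scalerDl _ _ _)) big_split /= d'E dE.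
  by rewrite addrC subrK.
Qed.

End Aux.

Theorem proposition3p2 (R : realType) (m n : nat) :
  (0 < m)%N -> (0 < n)%N ->
  forall cells : {set {set 'I_m * 'I_n}},
    is_vertex_subdivision R cells ->
    forall C, C \in cells -> interior_cell R C ->
    exists w : 'rV[R]_m,
      [/\ forall i, 0 < w 0 i,
          \sum_i w 0 i = 1
        & in_relint C (row_mx w (n%:R^-1 *: const_mx 1))].
Proof. by move=> m0 n0 cells _ C _ HC; apply: main. Qed.
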